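(* Let $T_s>0$, $t_k=kT_s$ ($k=0,1,2,\dots$), $a\ge 0$, $\eta>0$, and let $b[k]\ge 0$ be a sequence. Let $V:[0,\infty)\to[0,\infty)$ be continuous, differentiable on each interval $(t_k,t_{k+1})$, and satisfy the functional-differential inequality $$\dot V(t)\le -2\eta V(t)+\sqrt{V(t)}\left(a\sup_{t_k\le t'\le t}\sqrt{V(t')}+b[k]\right),\qquad t_k\le t<t_{k+1},\ k=0,1,\dots$$ Let $0<\eta'<\eta$ and suppose $q<1$, where $$q=\max\left\{e^{-\eta' T_s}+\frac{a(1-e^{-\eta' T_s})}{2\eta'},\ \frac{a}{2(\eta-\eta')}\right\},\qquad r=\max\left\{\frac{1-e^{-\eta' T_s}}{2\eta'},\ \frac{1}{2(\eta-\eta')}\right\}.$$ Set $W(t)=\sqrt{V(t)}$, $W[k]=W(t_k)$, $W_0=W[0]$. Then: 1. $W[k+1]\le qW[k]+r\,b[k]$ for all $k\ge 0$; 2. $W[k]\le q^kW_0+r\sum_{i=0}^{k-1}b[i]\,q^{k-i-1}$ for all $k\ge 0$; 3. if $q<\rho<1$ and $b[k]=\frac{\rho-q}{r}W[k]$ for all $k$, then $W[k]$ decays exponentially: $W[k]\le\rho^kW_0$ for all $k\ge 0$. *)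

(* Defs.v *)
From Stdlib Require Import Reals Lra.
Open Scope R_scope.

Fixpoint sumR (f : nat -> R) (n : nat) : R :=
  match n with
  | O => 0
  | S m => sumR f m + f m
  end.

Definition cont_on_nonneg (V : R -> R) : Prop :=
  forall t, 0 <= t -> limit1_in V (fun s => 0 <= s) (V t) t.

Definition q_const (Ts a eta eta' : R) : R :=
  Rmax (exp (- eta' * Ts) + a * (1 - exp (- eta' * Ts)) / (2 * eta'))
       (a / (2 * (eta - eta'))).

Definition r_const (Ts eta eta' : R) : R :=
  Rmax ((1 - exp (- eta' * Ts)) / (2 * eta')) (1 / (2 * (eta - eta'))).

(* Main.v *)
Require Import Defs.
From Stdlib Require Import Reals Lra Lia Classical.
Open Scope R_scope.
Lemma lim_ext f t : limit1_in f (fun s => 0<=s) (f t) t ->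
  forall eps, 0<eps -> exists d, 0<d /\ forall x, 0<=x -> Rabs (x - t) < d -> Rabs (f x - f t) < eps.
Proof.
  intros H eps He. destruct (H eps He) as [alp [Ha Hx]].
  exists alp; split; auto. intros x H0 H1. apply (Hx x). split; auto.
Qed.

Lemma barrier (f : R -> R) (al be : R) :
  0 <= al -> al < be ->
  (forall t, al <= t <= be -> limit1_in f (fun s => 0<=s) (f t) t) ->
  f al < 0 ->
  (forall t, al < t < be -> f t = 0 -> (forall u, al <= u <= t -> f u <= 0) ->
     exists l, derivable_pt_lim f t l /\ l < 0) ->
  forall t, al <= t <= be -> f t <= 0.
Proof.
  intros Hal Hab Hc Hf0 Hd s Hs.
  destruct (Rle_dec (f s) 0) as [|Hfs]; auto. exfalso. apply Rnot_le_lt in Hfs.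
  set (E := fun x => al <= x <= s /\ forall u, al <= u <= x -> f u <= 0).
  assert (HEal : E al).
  { split. lra. intros u Hu. replace u with al by lra. lra. }
  destruct (completeness E) as [c [Hub Hlub]].
  { exists s. intros x [Hx _]. lra. }
  { exists al; auto. }
  assert (Hac : al <= c) by (apply Hub; auto).
  assert (Hcs : c <= s) by (apply Hlub; intros x [Hx _]; lra).
  assert (P : forall u, al <= u < c -> f u <= 0).
  { intros u Hu. destruct (classic (is_upper_bound E u)) as [Hu'|Hu'].
    - apply Hlub in Hu'. lra.
    - apply not_all_ex_not in Hu'. destruct Hu' as [x Hx].
      apply imply_to_and in Hx. destruct Hx as [[Hx1 Hx2] Hx3].
      apply Hx2. lra. }
  assert (Hfc : f c <= 0).
  { destruct (Req_dec c al) as [->|Hne]. lra.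
    destruct (Rle_dec (f c) 0) as [|Hn]; auto. apply Rnot_le_lt in Hn.
    destruct (lim_ext f c (Hc c ltac:(lra)) (f c) Hn) as [d [Hd0 Hdx]].
    set (x := Rmax al (c - d/2)).
    assert (al <= x) by apply Rmax_l.
    assert (x < c) by (unfold x; apply Rmax_lub_lt; lra).
    assert (c - d/2 <= x) by apply Rmax_r.
    specialize (Hdx x ltac:(lra) ltac:(apply Rabs_def1; lra)).
    specialize (P x ltac:(lra)). apply Rabs_def2 in Hdx. lra. }
  assert (Hcs' : c < s) by (destruct Hcs; auto; subst; lra).
  assert (Q : forall u, al <= u <= c -> f u <= 0).
  { intros u Hu. destruct (Req_dec u c) as [->|]; auto. apply P; lra. }
  assert (Hy : exists y, c < y /\ E y).
  { destruct Hfc as [Hneg|Hz].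
    - destruct (lim_ext f c (Hc c ltac:(lra)) (- f c) ltac:(lra)) as [d [Hd0 Hdx]].
      exists (Rmin s (c + d/2)). assert (Rmin s (c+d/2) <= s) by apply Rmin_l.
      assert (Rmin s (c+d/2) <= c + d/2) by apply Rmin_r.
      assert (c < Rmin s (c+d/2)) by (apply Rmin_glb_lt; lra).
      split; auto. split. lra. intros u Hu.
      destruct (Rle_dec u c). apply Q; lra.
      specialize (Hdx u ltac:(lra) ltac:(apply Rabs_def1; lra)).
      apply Rabs_def2 in Hdx. lra.
    - assert (Hcal : al < c) by (destruct Hac; auto; subst; lra).
      destruct (Hd c ltac:(lra) Hz Q) as [l [Hl Hl0]].
      destruct (Hl (- l) ltac:(lra)) as [[d Hd0] Hdx]. simpl in Hdx.
      exists (Rmin s (c + d/2)). assert (Rmin s (c+d/2) <= s) by apply Rmin_l.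
      assert (Rmin s (c+d/2) <= c + d/2) by apply Rmin_r.
      assert (c < Rmin s (c+d/2)) by (apply Rmin_glb_lt; lra).
      split; auto. split. lra. intros u Hu.
      destruct (Rle_dec u c). apply Q; lra.
      specialize (Hdx (u - c) ltac:(lra) ltac:(rewrite Rabs_right; lra)).
      replace (c + (u - c)) with u in Hdx by ring. rewrite Hz in Hdx.
      apply Rabs_def2 in Hdx.
      assert (Hq : (f u - 0) / (u - c) < 0) by lra.
      unfold Rdiv in Hq. rewrite Rminus_0_r in Hq.
      destruct (Rle_dec (f u) 0) as [|Hn]; auto. apply Rnot_le_lt in Hn.
      assert (0 < f u * / (u - c)). apply Rmult_lt_0_compat; auto. apply Rinv_0_lt_compat; lra.
      lra. }
  destruct Hy as [y [Hy1 Hy2]]. apply Hub in Hy2. lra.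
Qed.
Lemma cont_lim h t D : continuity_pt h t -> limit1_in h D (h t) t.
Proof.
  intros H eps He. destruct (H eps He) as [alp [Ha Hx]].
  exists alp; split; auto. intros x [H0 H1].
  destruct (Req_dec x t) as [->|Hne].
  - simpl. unfold R_dist. rewrite Rminus_eq_0, Rabs_R0. lra.
  - apply Hx. split; auto. split; auto. exact I.
Qed.

Lemma comp_gen (V h h' : R -> R) al be :
 0 <= al -> al < be -> (forall t, al <= t <= be -> limit1_in V (fun s=>0<=s) (V t) t) ->
 (forall t, derivable_pt_lim h t (h' t)) -> V al < h al * h al ->
 (forall t, al < t < be -> V t = h t * h t -> (forall u, al <= u <= t -> V u <= h u * h u) ->
    exists d, derivable_pt_lim V t d /\ d < 2 * h t * h' t) ->
 forall t, al <= t <= be -> V t <= h t * h t.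
Proof.
  intros H0 H1 HV Hh Hal Hd t Ht.
  cut ((fun t => V t - h t * h t) t <= 0). simpl; lra.
  apply (barrier _ al be); auto.
  - intros u Hu. apply limit_minus; auto. apply limit_mul; apply cont_lim;
    apply derivable_continuous_pt; exists (h' u); apply Hh.
  - simpl. lra.
  - intros u Hu Hz Hle. simpl in Hz.
    destruct (Hd u Hu ltac:(lra) ltac:(intros w Hw; specialize (Hle w Hw); simpl in Hle; lra)) as [d [Hd1 Hd2]].
    exists (d - (h' u * h u + h u * h' u)). split. 2: lra.
    apply (derivable_pt_lim_minus V (h * h)%F); auto.
    apply derivable_pt_lim_mult; auto.
Qed.
Lemma dlin f A B t l : derivable_pt_lim f t l -> derivable_pt_lim (fun x => A + B * f x) t (0 + B * l).
Proof.
  intro H. apply (derivable_pt_lim_plus (fct_cte A) (mult_real_fct B f)).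
  apply derivable_pt_lim_const. apply derivable_pt_lim_scal; auto.
Qed.

Lemma dexp c al t : derivable_pt_lim (fun x => exp (c * (x - al))) t (exp (c * (t - al)) * c).
Proof.
  apply (derivable_pt_lim_comp (fun x => c * (x - al)) exp).
  - intros eps He. exists (mkposreal 1 Rlt_0_1). intros h Hh _.
    replace ((c * (t + h - al) - c * (t - al)) / h - c) with 0 by (field; auto).
    rewrite Rabs_R0; lra.
  - apply derivable_pt_lim_exp.
Qed.
Lemma sqrt_bound_eps x y : (forall eps, 0 < eps -> sqrt x <= y + eps) -> sqrt x <= y.
Proof. intros H. apply Rle_plus_epsilon. auto. Qed.

Lemma step (Ts a eta eta' bk al : R) (V : R -> R)
  (hTs : 0 < Ts) (ha : 0 <= a) (heta : 0 < eta) (hb : 0 <= bk) (hal : 0 <= al)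
  (hVnn : forall t, 0 <= t -> 0 <= V t)
  (hVc : forall t, 0 <= t -> limit1_in V (fun s => 0 <= s) (V t) t)
  (hVd : forall t, al < t < al + Ts ->
      exists d, derivable_pt_lim V t d /\
        exists S, is_lub (fun y => exists t', al <= t' <= t /\ y = sqrt (V t')) S /\
          d <= - 2 * eta * V t + sqrt (V t) * (a * S + bk))
  (heta' : 0 < eta' < eta) (ha2 : a < 2 * eta') :
  let Wk := sqrt (V al) in
  let M := Rmax Wk (bk / (2 * eta - a)) in
  (forall t, al <= t <= al + Ts -> sqrt (V t) <= M) /\
  (bk / (2 * eta - a) <= Wk ->
    let C := (a * Wk + bk) / (2 * eta') in
    sqrt (V (al + Ts)) <= C + (Wk - C) * exp (- eta' * Ts)).
Proof.
  intros Wk M.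
  assert (HWk : 0 <= Wk) by apply sqrt_pos.
  assert (HVal : V al = Wk * Wk) by (unfold Wk; rewrite sqrt_sqrt; auto).
  assert (HM1 : Wk <= M) by apply Rmax_l.
  assert (HM2 : bk / (2 * eta - a) <= M) by apply Rmax_r.
  assert (HbM : bk <= (2 * eta - a) * M).
  { apply Rmult_le_compat_l with (r := 2*eta - a) in HM2; [|lra].
    replace ((2 * eta - a) * (bk / (2 * eta - a))) with bk in HM2 by (field; lra). lra. }
  assert (A : forall t, al <= t <= al + Ts -> sqrt (V t) <= M).
  { intros t Ht. apply sqrt_bound_eps. intros eps He.
    assert (Hh : V t <= (fun _ => M + eps) t * (fun _ => M + eps) t).
    { apply (comp_gen V (fun _ => M + eps) (fun _ => 0) al (al + Ts)); auto; try lra.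
      - intros u Hu. apply hVc; lra.
      - intros u. apply (derivable_pt_lim_const (M + eps)).
      - rewrite HVal. nra.
      - intros u Hu Hz Hle. destruct (hVd u Hu) as [d [Hd [S [[Hub Hlub] Hdb]]]].
        exists d; split; auto.
        assert (HS : S <= M + eps).
        { apply Hlub. intros y [t' [Ht' ->]].
          rewrite <- (sqrt_square (M + eps)) by lra. apply sqrt_le_1_alt. apply Hle; auto. }
        rewrite Hz in Hdb. rewrite sqrt_square in Hdb by lra.
        assert (a * S <= a * (M + eps)) by (apply Rmult_le_compat_l; auto).
        assert (Hp : (M+eps) * (a * S + bk) <= (M+eps) * (a * (M + eps) + bk)) by (apply Rmult_le_compat_l; lra).
        assert (Hpos : 0 < (M+eps) * ((2*eta - a) * eps)) by (apply Rmult_lt_0_compat; [lra| apply Rmult_lt_0_compat; lra]).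
        assert (HM0 : 0 <= M) by lra.
        nra. }
    simpl in Hh. rewrite <- (sqrt_square (M + eps)) by lra. apply sqrt_le_1_alt; auto. }
  split; auto.
  intros Hcase C.
  assert (HMW : M = Wk) by (unfold M; apply Rmax_left; auto).
  assert (HC : 0 <= C) by (unfold C; apply Rmult_le_pos; [nra | apply Rlt_le, Rinv_0_lt_compat; lra]).
  apply sqrt_bound_eps. intros eps He.
  set (h := fun x => C + (Wk - C) * exp (- eta' * (x - al)) + eps).
  set (h' := fun x => 0 + (Wk - C) * (exp (- eta' * (x - al)) * - eta') + 0).
  assert (Hg : forall t, al <= t -> 0 <= C + (Wk - C) * exp (- eta' * (t - al))).
  { intros t Ht. assert (0 < exp (- eta' * (t - al))) by apply exp_pos.
    assert (exp (- eta' * (t - al)) <= 1).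
    { rewrite <- exp_0. destruct (Req_dec t al) as [->|]. right; f_equal; ring.
      left. apply exp_increasing. nra. }
    nra. }
  assert (Hh : V (al + Ts) <= h (al + Ts) * h (al + Ts)).
  { apply (comp_gen V h h' al (al + Ts)); auto; try lra.
    - intros u Hu. apply hVc; lra.
    - intros u. unfold h, h'. apply (derivable_pt_lim_plus _ (fct_cte eps)).
      apply (dlin (fun x => exp (- eta' * (x - al)))). apply dexp.
      apply derivable_pt_lim_const.
    - rewrite HVal. unfold h. replace (- eta' * (al - al)) with 0 by ring. rewrite exp_0. nra.
    - intros u Hu Hz Hle. destruct (hVd u Hu) as [d [Hd [S [[Hub Hlub] Hdb]]]].
      exists d; split; auto.
      assert (HS : S <= Wk).
      { apply Hlub. intros y [t' [Ht' ->]]. rewrite <- HMW. apply A. lra. }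
      assert (Hgu := Hg u ltac:(lra)).
      assert (Hhp : 0 < h u) by (unfold h; lra).
      rewrite Hz in Hdb. rewrite sqrt_square in Hdb by lra.
      assert (a * S <= a * Wk) by (apply Rmult_le_compat_l; auto).
      assert (Hp : h u * (a * S + bk) <= h u * (a * Wk + bk)) by (apply Rmult_le_compat_l; lra).
      assert (Hh'u : h' u = - eta' * (h u - eps) + (a * Wk + bk) / 2).
      { unfold h', h, C. field. lra. }
      rewrite Hh'u.
      assert (eta * h u > eta' * (h u - eps)).
      { unfold h in *. nra. }
      nra. }
  assert (Hh0 : 0 <= h (al + Ts)) by (unfold h; assert (Hgg := Hg (al + Ts) ltac:(lra)); lra).
  assert (Hsq := sqrt_le_1_alt _ _ Hh). rewrite sqrt_square in Hsq by lra.
  unfold h in Hsq. replace (al + Ts - al) with Ts in Hsq by ring. lra.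
Qed.

Lemma sumR_ext f g n : (forall i, (i < n)%nat -> f i = g i) -> sumR f n = sumR g n.
Proof. induction n; simpl; intros H; auto. rewrite IHn by (intros; apply H; lia). rewrite H by lia. auto. Qed.

Lemma sumR_S f n : sumR f (S n) = sumR f n + f n.
Proof. reflexivity. Qed.

Lemma sumR_scal c f n : c * sumR f n = sumR (fun i => c * f i) n.
Proof. induction n; simpl. ring. rewrite <- IHn. ring. Qed.

Theorem lemma1 (Ts a eta eta' : R) (b : nat -> R) (V : R -> R)
  (hTs : 0 < Ts) (ha : 0 <= a) (heta : 0 < eta)
  (hb : forall k, 0 <= b k)
  (hVnn : forall t, 0 <= t -> 0 <= V t)
  (hVc : cont_on_nonneg V)
  (hVd : forall (k : nat) (t : R),
      INR k * Ts < t < INR (S k) * Ts ->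
      exists d, derivable_pt_lim V t d /\
        exists S, is_lub (fun y => exists t', INR k * Ts <= t' <= t /\ y = sqrt (V t')) S /\
          d <= - 2 * eta * V t + sqrt (V t) * (a * S + b k))
  (heta' : 0 < eta' < eta)
  (hq : q_const Ts a eta eta' < 1) :
  let q := q_const Ts a eta eta' in
  let r := r_const Ts eta eta' in
  let W := fun k : nat => sqrt (V (INR k * Ts)) in
  (forall k, W (S k) <= q * W k + r * b k) /\
  (forall k, W k <= q ^ k * W O + r * sumR (fun i => b i * q ^ (k - i - 1)) k) /\
  (forall rho, q < rho < 1 ->
     (forall k, b k = (rho - q) / r * W k) ->
     forall k, W k <= rho ^ k * W O).
Proof.
  intros q r W.
  set (e := exp (- eta' * Ts)).
  assert (He0 : 0 < e) by apply exp_pos.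
  assert (He1 : e < 1) by (unfold e; rewrite <- exp_0; apply exp_increasing; nra).
  assert (Hq1 : e + a * (1 - e) / (2 * eta') <= q) by apply Rmax_l.
  assert (Hq2 : a / (2 * (eta - eta')) <= q) by apply Rmax_r.
  assert (Hr1 : (1 - e) / (2 * eta') <= r) by apply Rmax_l.
  assert (Hr2 : 1 / (2 * (eta - eta')) <= r) by apply Rmax_r.
  assert (Hqlt : q < 1) by exact hq.
  assert (Hq0 : 0 <= q).
  { eapply Rle_trans; [|exact Hq2]. unfold Rdiv. apply Rmult_le_pos; auto.
    apply Rlt_le, Rinv_0_lt_compat; lra. }
  assert (Hr0 : 0 < r).
  { eapply Rlt_le_trans; [|exact Hr2]. unfold Rdiv. apply Rmult_lt_0_compat; [lra|].
    apply Rinv_0_lt_compat; lra. }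
  assert (Ha2 : a < 2 * eta').
  { assert (H1 : a * (1 - e) / (2 * eta') < 1 - e) by lra.
    assert (H2 : a * (1 - e) < (1 - e) * (2 * eta')).
    { apply Rmult_lt_compat_r with (r := 2 * eta') in H1; [|lra].
      replace (a * (1 - e) / (2 * eta') * (2 * eta')) with (a * (1 - e)) in H1 by (field; lra). lra. }
    nra. }
  assert (P1 : forall k, W (S k) <= q * W k + r * b k).
  { intro k. unfold W.
    assert (Hal : 0 <= INR k * Ts) by (apply Rmult_le_pos; [apply pos_INR | lra]).
    replace (INR (S k) * Ts) with (INR k * Ts + Ts) by (rewrite S_INR; ring).
    destruct (step Ts a eta eta' (b k) (INR k * Ts) V hTs ha heta (hb k) Hal hVnn
       (fun t Ht => hVc t Ht)
       (fun t Ht => hVd k t ltac:(rewrite S_INR; lra)) heta' Ha2) as [A Bc].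
    set (Wk := sqrt (V (INR k * Ts))) in *.
    assert (HWk : 0 <= Wk) by apply sqrt_pos.
    assert (Hbk := hb k).
    destruct (Rle_dec (b k / (2 * eta - a)) Wk) as [Hc|Hc].
    - specialize (Bc Hc). simpl in Bc. fold e in Bc.
      eapply Rle_trans; [exact Bc|].
      replace ((a * Wk + b k) / (2 * eta') + (Wk - (a * Wk + b k) / (2 * eta')) * e)
        with ((e + a * (1 - e) / (2 * eta')) * Wk + ((1 - e) / (2 * eta')) * b k) by (field; lra).
      apply Rplus_le_compat; apply Rmult_le_compat_r; auto.
    - assert (HA := A (INR k * Ts + Ts) ltac:(lra)).
      rewrite Rmax_right in HA by lra.
      eapply Rle_trans; [exact HA|].
      assert (b k / (2 * eta - a) <= r * b k).
      { unfold Rdiv. rewrite Rmult_comm. apply Rmult_le_compat_r; auto.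
        eapply Rle_trans; [|exact Hr2]. unfold Rdiv. rewrite Rmult_1_l.
        apply Rinv_le_contravar; lra. }
      assert (0 <= q * Wk) by (apply Rmult_le_pos; auto). lra. }
  split; [exact P1|]. split.
  - induction k.
    + simpl. lra.
    + rewrite sumR_S. cbv beta.
      rewrite (sumR_ext (fun i => b i * q ^ (S k - i - 1)) (fun i => q * (b i * q ^ (k - i - 1)))).
      2:{ intros i Hi. replace (S k - i - 1)%nat with (S (k - i - 1)) by lia. simpl. ring. }
      rewrite <- sumR_scal. replace (S k - k - 1)%nat with 0%nat by lia.
      eapply Rle_trans; [apply P1|]. change (q ^ S k) with (q * q ^ k). rewrite pow_O.
      assert (q * W k <= q * (q ^ k * W 0%nat + r * sumR (fun i => b i * q ^ (k - i - 1)) k))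
        by (apply Rmult_le_compat_l; auto).
      set (X := sumR (fun i => b i * q ^ (k - i - 1)) k) in *.
      replace (q * q ^ k * W 0%nat + r * (q * X + b k * 1)) with
        (q * (q ^ k * W 0%nat + r * X) + r * b k) by ring.
      lra.
  - intros rho Hrho Hbr k. induction k.
    + simpl. lra.
    + eapply Rle_trans; [apply P1|]. rewrite Hbr.
      replace (q * W k + r * ((rho - q) / r * W k)) with (rho * W k) by (field; lra).
      simpl. assert (0 <= rho) by lra. apply Rmult_le_compat_l with (r := rho) in IHk; auto. lra.
Qed.
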